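(* Let $K:\ell^2\to\mathcal{H}$ be a bounded, linear and injective operator into a real Hilbert space $\mathcal{H}$, $f\in\mathcal{H}$, $w=(w_k)$ with $w_k\ge w_0>0$, and $\gamma>0$. For $u\in\ell^2$ let $\mathcal{A}=\{k: |u-\gamma K^*(Ku-f)|_k>\gamma w_k\}$, $\mathcal{I}=\mathbb{N}\setminus\mathcal{A}$, and $\mathcal{G}(u)=\begin{pmatrix}\gamma\mathcal{M}_{\mathcal{A}\mathcal{A}} & \gamma\mathcal{M}_{\mathcal{A}\mathcal{I}}\\ 0 & I_{\mathcal{I}}\end{pmatrix}$ (equivalently $\mathcal{G}(u)=(I-P_{\mathcal{A}})+\gamma P_{\mathcal{A}}K^*K$). Then $\mathcal{G}(u)$ is boundedly invertible from $\ell^2$ onto $\ell^2$, and $$\|\mathcal{G}(u)^{-1}\|\le\|\mathcal{M}_{\mathcal{A}\mathcal{A}}^{-1}\|\big(\tfrac1\gamma+\|\mathcal{M}_{\mathcal{A}\mathcal{I}}\|\big)+1.$$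
   Context: $K^*$ is the Hilbert space adjoint of $K$; $|x|_k$ means $|x_k|$. $P_{\mathcal{B}}$ denotes the coordinate projection onto the indices in $\mathcal{B}\subset\mathbb{N}$, and for index sets $\mathcal{B},\mathcal{C}$, $\mathcal{M}_{\mathcal{B}\mathcal{C}}=P_{\mathcal{B}}K^*K|_{\ell^2(\mathcal{C})}$, viewed as an operator from sequences supported on $\mathcal{C}$ to sequences supported on $\mathcal{B}$; $\mathcal{M}_{\mathcal{A}\mathcal{A}}^{-1}$ is the inverse of $\mathcal{M}_{\mathcal{A}\mathcal{A}}$ on the (finite-dimensional) space of sequences supported on $\mathcal{A}$. *)

(* Defs.v *)
From Stdlib Require Import Reals.
From Coquelicot Require Import Coquelicot.
Open Scope R_scope.

Definition seqR := nat -> R.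

Definition l2 (u : seqR) : Prop := ex_series (fun k => (u k) ^ 2).
Definition l2inner (u v : seqR) : R := Series (fun k => u k * v k).
Definition l2norm (u : seqR) : R := sqrt (Series (fun k => (u k) ^ 2)).

Definition seq_add (u v : seqR) : seqR := fun k => u k + v k.
Definition seq_scal (a : R) (u : seqR) : seqR := fun k => a * u k.

Definition is_inner_product (H : CompleteNormedModule R_AbsRing)
  (ip : H -> H -> R) : Prop :=
  (forall x y, ip x y = ip y x) /\
  (forall x y z, ip (plus x y) z = ip x z + ip y z) /\
  (forall (a : R) x y, ip (scal a x) y = a * ip x y) /\
  (forall x, norm x = sqrt (ip x x)).

Definition proj (B : nat -> bool) (x : seqR) : seqR :=
  fun k => if B k then x k else 0.

Definition supported_on (B : nat -> bool) (x : seqR) : Prop :=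
  l2 x /\ forall k, B k = false -> x k = 0.

Definition opnorm (D : seqR -> Prop) (T : seqR -> seqR) : Rbar :=
  Lub_Rbar (fun r => exists x, D x /\ l2norm x <= 1 /\ r = l2norm (T x)).

Definition active_set {H : CompleteNormedModule R_AbsRing}
  (K : seqR -> H) (Kadj : H -> seqR) (f : H) (w : seqR) (gamma : R)
  (u : seqR) : nat -> bool :=
  fun k => if Rlt_dec (gamma * w k)
                      (Rabs (u k - gamma * Kadj (minus (K u) f) k))
           then true else false.

Definition Gop {H : CompleteNormedModule R_AbsRing}
  (K : seqR -> H) (Kadj : H -> seqR) (A : nat -> bool) (gamma : R)
  (v : seqR) : seqR :=
  fun k => if A k then gamma * Kadj (K v) k else v k.

(** M_{BC} = P_B K^* K restricted to sequences supported on C (the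
    restriction is expressed by the domain used in opnorm / inverses). *)
Definition Mop {H : CompleteNormedModule R_AbsRing}
  (K : seqR -> H) (Kadj : H -> seqR) (B : nat -> bool) (v : seqR) : seqR :=
  proj B (Kadj (K v)).

(* Main.v *)
Require Import Defs.
From Stdlib Require Import Reals.
From Coquelicot Require Import Coquelicot.
Open Scope R_scope.
From Stdlib Require Import Lra Psatz FunctionalExtensionality ClassicalEpsilon Classical List.


Definition zs : seqR := fun _ => 0.
Definition bump (s : nat) (c : R) : seqR := fun n => if Nat.eq_dec n s then c else 0.
Definition ev (s : nat) : seqR := bump s 1.

Lemma sum_bump_lt s c n : (n < s)%nat -> sum_f_R0 (bump s c) n = 0.
Proof.
  induction n; intros Hn; simpl.
  - unfold bump; destruct (Nat.eq_dec 0 s); [lia|lra].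
  - rewrite IHn by lia. unfold bump; destruct (Nat.eq_dec (S n) s); [lia|lra].
Qed.

Lemma sum_bump_ge s c n : (s <= n)%nat -> sum_f_R0 (bump s c) n = c.
Proof.
  induction n; intros Hn; simpl.
  - unfold bump; destruct (Nat.eq_dec 0 s); [lra|lia].
  - destruct (Nat.eq_dec (S n) s).
    + rewrite sum_bump_lt by lia. unfold bump; destruct (Nat.eq_dec (S n) s); [lra|lia].
    + rewrite IHn by lia. unfold bump; destruct (Nat.eq_dec (S n) s); [lia|lra].
Qed.

Lemma is_series_bump s c : is_series (bump s c) c.
Proof.
  apply is_series_Reals. intros eps He.
  exists s. intros n Hn. rewrite sum_bump_ge by lia. unfold R_dist.
  replace (c - c) with 0 by lra. rewrite Rabs_R0. lra.
Qed.
Lemma Series_bump s c : Series (bump s c) = c.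
Proof. apply is_series_unique, is_series_bump. Qed.
Lemma ex_series_bump s c : ex_series (bump s c).
Proof. exists c; apply is_series_bump. Qed.

Lemma Series_zero : Series zs = 0.
Proof.
  rewrite (Series_ext zs (fun n => 0 * zs n)) by (intros; unfold zs; lra).
  rewrite Series_scal_l. lra.
Qed.

Lemma exR_plus a b : ex_series a -> ex_series b -> ex_series (fun n => a n + b n).
Proof. intros Ha Hb. exact (ex_series_plus a b Ha Hb). Qed.
Lemma exR_scal c a : ex_series a -> ex_series (fun n => c * a n).
Proof. intros Ha. exact (ex_series_scal_l c a Ha). Qed.
Lemma exR_ext (a b : nat -> R) : (forall n, a n = b n) -> ex_series a -> ex_series b.
Proof. intros H Ha. exact (ex_series_ext a b H Ha). Qed.
Lemma exR_le a b : (forall n, Rabs (a n) <= b n) -> ex_series b -> ex_series a.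
Proof. intros H Hb. exact (ex_series_le a b H Hb). Qed.

Lemma l2_add x y : l2 x -> l2 y -> l2 (seq_add x y).
Proof.
  unfold l2, seq_add; intros Hx Hy.
  apply (exR_le _ (fun n => 2 * (x n)^2 + 2 * (y n)^2)).
  - intros n. rewrite Rabs_pos_eq. pose proof (pow2_ge_0 (x n - y n)); nra. apply pow2_ge_0.
  - apply exR_plus; apply exR_scal; assumption.
Qed.

Lemma l2_scal a x : l2 x -> l2 (seq_scal a x).
Proof.
  unfold l2, seq_scal; intros Hx.
  apply (exR_ext (fun n => a^2 * (x n)^2)).
 intros n; ring.
  apply exR_scal; auto.
Qed.

Lemma l2_proj B x : l2 x -> l2 (proj B x).
Proof.
  unfold l2, proj; intros Hx. apply (exR_le _ (fun n => (x n)^2)); auto.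
  intros n. destruct (B n); rewrite Rabs_pos_eq; nra.
Qed.

Lemma l2_zs : l2 zs.
Proof. unfold l2. apply (exR_ext (bump 0 0)). intros n; unfold bump, zs.
  destruct (Nat.eq_dec n 0); ring. apply ex_series_bump. Qed.

Lemma ex_prod x y : l2 x -> l2 y -> ex_series (fun k => x k * y k).
Proof.
  unfold l2; intros Hx Hy.
  apply (exR_le _ (fun n => /2 * (x n)^2 + /2 * (y n)^2)).
  - intros n. pose proof (pow2_ge_0 (x n - y n)); pose proof (pow2_ge_0 (x n + y n)).
    apply Rabs_le; split; nra.
  - apply exR_plus; apply exR_scal; assumption.
Qed.

Lemma l2inner_add_l x y z : l2 x -> l2 y -> l2 z ->
  l2inner (seq_add x y) z = l2inner x z + l2inner y z.
Proof.
  intros Hx Hy Hz; unfold l2inner, seq_add.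
  rewrite <- Series_plus by (apply ex_prod; auto).
  apply Series_ext; intros; ring.
Qed.

Lemma l2inner_scal_l a x z : l2inner (seq_scal a x) z = a * l2inner x z.
Proof.
  unfold l2inner, seq_scal. rewrite <- Series_scal_l. apply Series_ext; intros; ring.
Qed.

Lemma l2inner_sym x y : l2inner x y = l2inner y x.
Proof. unfold l2inner; apply Series_ext; intros; ring. Qed.

Lemma l2norm_eq x : l2norm x = sqrt (l2inner x x).
Proof. unfold l2norm, l2inner; f_equal; apply Series_ext; intros; ring. Qed.

Lemma Series_nonneg a : ex_series a -> (forall n, 0 <= a n) -> 0 <= Series a.
Proof.
  intros Ha Hp. rewrite <- Series_zero. apply Series_le; auto.
  intros n; unfold zs; split; [lra|auto].
Qed.

Lemma l2inner_pos x : l2 x -> 0 <= l2inner x x.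
Proof.
  intros Hx; apply Series_nonneg. apply ex_prod; auto. intros; nra.
Qed.

Lemma quad a b c : (forall t, 0 <= a - 2 * t * b + t^2 * c) -> 0 <= c -> b^2 <= a * c.
Proof.
  intros Ht Hc. destruct (Req_dec c 0) as [E|E].
  - subst c. destruct (Req_dec b 0) as [Eb|Eb].
    + subst b. nra.
    + specialize (Ht ((a+1)/(2*b))). exfalso.
      replace (a - 2 * ((a + 1) / (2 * b)) * b + ((a + 1) / (2 * b)) ^ 2 * 0) with (-1) in Ht
        by (field; auto). lra.
  - specialize (Ht (b/c)).
    replace (a - 2 * (b / c) * b + (b / c) ^ 2 * c) with (a - b^2 / c) in Ht by (field; auto).
    assert (0 < c) by lra.
    assert (b^2/c <= a) by lra.
    apply Rmult_le_compat_r with (r := c) in H0; [|lra].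
    replace (b^2/c*c) with (b^2) in H0 by (field; lra). lra.
Qed.

Lemma sqrt_bound a b c : b^2 <= a * c -> 0 <= a -> 0 <= c -> b <= sqrt a * sqrt c.
Proof.
  intros H Ha Hc. rewrite <- sqrt_mult by auto.
  apply Rle_trans with (Rabs b). apply Rle_abs.
  rewrite <- sqrt_Rsqr_abs. apply sqrt_le_1_alt. unfold Rsqr. lra.
Qed.

Lemma l2_CS x y : l2 x -> l2 y -> l2inner x y <= l2norm x * l2norm y.
Proof.
  intros Hx Hy. rewrite !l2norm_eq.
  apply sqrt_bound; try (apply l2inner_pos; auto).
  apply quad; [|apply l2inner_pos; auto].
  intros t. set (w := seq_add x (seq_scal (-t) y)).
  assert (Hw : l2 w) by (apply l2_add; auto; apply l2_scal; auto).
  assert (E : l2inner w w = l2inner x x - 2 * t * l2inner x y + t^2 * l2inner y y).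
  { unfold w at 1. rewrite l2inner_add_l; auto; [|apply l2_scal; auto].
    rewrite l2inner_scal_l. rewrite (l2inner_sym x w), (l2inner_sym y w). unfold w.
    rewrite !l2inner_add_l; auto; try (apply l2_scal; auto).
    rewrite !l2inner_scal_l. rewrite (l2inner_sym y x). ring. }
  rewrite <- E. apply l2inner_pos; auto.
Qed.

Lemma l2norm_nonneg x : 0 <= l2norm x.
Proof. apply sqrt_pos. Qed.

Lemma l2_Mink x y : l2 x -> l2 y -> l2norm (seq_add x y) <= l2norm x + l2norm y.
Proof.
  intros Hx Hy.
  pose proof (l2_CS x y Hx Hy) as C.
  pose proof (l2norm_nonneg x); pose proof (l2norm_nonneg y).
  rewrite (l2norm_eq (seq_add x y)).
  rewrite <- (sqrt_pow2 (l2norm x + l2norm y)) by lra.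
  apply sqrt_le_1_alt.
  rewrite l2inner_add_l; auto; [|apply l2_add; auto].
  rewrite (l2inner_sym x), (l2inner_sym y).
  rewrite !l2inner_add_l; auto.
  assert (l2norm x ^2 = l2inner x x) as Ex.
  { rewrite l2norm_eq, pow2_sqrt; auto. apply l2inner_pos; auto. }
  assert (l2norm y ^2 = l2inner y y) as Ey.
  { rewrite l2norm_eq, pow2_sqrt; auto. apply l2inner_pos; auto. }
  rewrite (l2inner_sym y x). nra.
Qed.

Lemma l2norm_scal a x : l2norm (seq_scal a x) = Rabs a * l2norm x.
Proof.
  unfold l2norm, seq_scal.
  rewrite (Series_ext _ (fun n => a^2 * (x n)^2)) by (intros; ring).
  rewrite Series_scal_l.
  destruct (Rle_dec 0 (Series (fun k => x k ^ 2))) as [P|P].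
  - rewrite sqrt_mult by (auto; apply pow2_ge_0).
    rewrite <- sqrt_Rsqr_abs. unfold Rsqr. f_equal. f_equal. ring.
  - rewrite !sqrt_neg_0 by (try lra; pose proof (pow2_ge_0 a); nra). ring.
Qed.

Lemma l2norm_proj_le B x : l2 x -> l2norm (proj B x) <= l2norm x.
Proof.
  intros Hx. unfold l2norm. apply sqrt_le_1_alt. apply Series_le; auto.
  intros n; unfold proj; destruct (B n); split; nra.
Qed.

Lemma term_sq_le x k : l2 x -> (x k)^2 <= Series (fun n => (x n)^2).
Proof.
  intros Hx. rewrite <- (Series_bump k (x k ^2)) at 1. apply Series_le; auto.
  intros n; unfold bump; destruct (Nat.eq_dec n k); [subst|]; split; nra.
Qed.

Lemma term_le x k : l2 x -> Rabs (x k) <= l2norm x.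
Proof.
  intros Hx. rewrite <- sqrt_Rsqr_abs. apply sqrt_le_1_alt. unfold Rsqr.
  pose proof (term_sq_le x k Hx). nra.
Qed.

Lemma l2norm_zero x : l2 x -> l2norm x = 0 -> x = zs.
Proof.
  intros Hx E. apply functional_extensionality; intros k.
  pose proof (term_le x k Hx). unfold zs. rewrite E in H.
  pose proof (Rabs_pos (x k)). apply Rabs_eq_0. lra.
Qed.

Lemma l2inner_ev k v : l2inner (ev k) v = v k.
Proof.
  unfold l2inner. rewrite <- (Series_bump k (v k)). apply Series_ext.
  intros n; unfold ev, bump; destruct (Nat.eq_dec n k); subst; ring.
Qed.

Lemma l2_ev k : l2 (ev k).
Proof.
  unfold l2. apply (exR_ext (bump k 1)). intros n; unfold ev, bump.
  destruct (Nat.eq_dec n k); ring. apply ex_series_bump.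
Qed.

Section HS.
End HS.

Lemma ip_zero_l (H : CompleteNormedModule R_AbsRing) ip : is_inner_product H ip ->
  forall y, ip zero y = 0.
Proof.
  intros [Hs [Hp [Hsc Hn]]] y.
  assert (E : scal (0:R) (@zero H) = zero) by apply (scal_zero_l (@zero H)).
  replace (ip zero y) with (ip (scal (0:R) (@zero H)) y) by (f_equal; exact E). rewrite Hsc. apply Rmult_0_l.
Qed.

Lemma ip_pos (H : CompleteNormedModule R_AbsRing) ip : is_inner_product H ip ->
  forall x, 0 <= ip x x.
Proof.
  intros Hi x. destruct (Rle_dec 0 (ip x x)) as [P|P]; auto. exfalso.
  destruct Hi as [Hs [Hp [Hsc Hn]]] eqn:Ei.
  assert (norm x = 0) by (rewrite Hn; apply sqrt_neg_0; lra).
  apply norm_eq_zero in H0. subst x. rewrite (ip_zero_l H ip Hi) in P. lra.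
Qed.

Lemma ip_pos_strict (H : CompleteNormedModule R_AbsRing) ip : is_inner_product H ip ->
  forall x, x <> zero -> 0 < ip x x.
Proof.
  intros Hi x Hx. destruct (Rlt_dec 0 (ip x x)) as [P|P]; auto. exfalso.
  destruct Hi as [Hs [Hp [Hsc Hn]]] eqn:Ei.
  assert (norm x = 0) by (rewrite Hn; apply sqrt_neg_0; lra).
  apply norm_eq_zero in H0. auto.
Qed.

Lemma ip_CS (H : CompleteNormedModule R_AbsRing) ip : is_inner_product H ip ->
  forall x y, ip x y <= norm x * norm y.
Proof.
  intros Hi x y. pose proof Hi as [Hs [Hp [Hsc Hn]]].
  rewrite !Hn. apply sqrt_bound; try apply (ip_pos H ip Hi).
  apply quad; [|apply (ip_pos H ip Hi)].
  intros t. set (w := plus x (scal (-t) y)).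
  assert (E : ip w w = ip x x - 2 * t * ip x y + t^2 * ip y y).
  { unfold w. rewrite Hp, Hsc. rewrite (Hs x), (Hs y). rewrite !Hp, !Hsc.
    rewrite (Hs y x). simpl. ring. }
  rewrite <- E. apply (ip_pos H ip Hi).
Qed.

Lemma l2norm_zs : l2norm zs = 0.
Proof.
  unfold l2norm. rewrite (Series_ext _ zs) by (intros; unfold zs; ring).
  rewrite Series_zero. apply sqrt_0.
Qed.

Lemma supp_add B x y : supported_on B x -> supported_on B y -> supported_on B (seq_add x y).
Proof.
  intros [Hx Hx'] [Hy Hy']. split. apply l2_add; auto.
  intros k Hk; unfold seq_add; rewrite Hx', Hy' by auto; ring.
Qed.

Lemma supp_scal B a x : supported_on B x -> supported_on B (seq_scal a x).
Proof.
  intros [Hx Hx']. split. apply l2_scal; auto.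
  intros k Hk; unfold seq_scal; rewrite Hx' by auto; ring.
Qed.

Lemma supp_proj B x : l2 x -> supported_on B (proj B x).
Proof.
  intros Hx; split. apply l2_proj; auto. intros k Hk; unfold proj; rewrite Hk; auto.
Qed.

Lemma opnorm_fin (D : seqR -> Prop) (T : seqR -> seqR) (C : R) :
  D zs -> (forall x, D x -> l2norm x <= 1 -> l2norm (T x) <= C) ->
  exists r, opnorm D T = Finite r /\ 0 <= r /\
    (forall x, D x -> l2norm x <= 1 -> l2norm (T x) <= r).
Proof.
  intros H0 HC. unfold opnorm.
  destruct (Lub_Rbar_correct (fun r => exists x, D x /\ l2norm x <= 1 /\ r = l2norm (T x)))
    as [Hub Hlub].
  assert (Hle : Rbar_le (Lub_Rbar (fun r => exists x, D x /\ l2norm x <= 1 /\ r = l2norm (T x))) (Finite C)).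
  { apply Hlub. intros r [x [Hx [Hx1 ->]]]. simpl. apply HC; auto. }
  assert (Hub' : forall x, D x -> l2norm x <= 1 ->
    Rbar_le (Finite (l2norm (T x))) (Lub_Rbar (fun r => exists x, D x /\ l2norm x <= 1 /\ r = l2norm (T x)))).
  { intros x Hx Hx1. apply Hub. exists x; auto. }
  assert (Z1 : l2norm zs <= 1) by (rewrite l2norm_zs; lra).
  pose proof (Hub' zs H0 Z1) as Hge.
  revert Hle Hub' Hge.
  destruct (Lub_Rbar _) as [r| |]; simpl; intros Hle Hub' Hge; try contradiction.
  exists r. split; auto. split. pose proof (l2norm_nonneg (T zs)); lra.
  intros x Hx Hx1. apply (Hub' x Hx Hx1).
Qed.

Lemma scale_bound (D : seqR -> Prop) (T : seqR -> seqR) (r : R) :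
  (forall x, D x -> l2 x) -> (forall a x, D x -> D (seq_scal a x)) ->
  (forall a x, D x -> T (seq_scal a x) = seq_scal a (T x)) ->
  (forall x, D x -> l2norm x <= 1 -> l2norm (T x) <= r) ->
  forall x, D x -> l2norm (T x) <= r * l2norm x.
Proof.
  intros Hl Hs Ht Hb x Hx. destruct (Req_dec (l2norm x) 0) as [Z|Z].
  - pose proof (l2norm_zero x (Hl x Hx) Z) as Ez.
    assert (Ex : seq_scal 0 x = x).
    { rewrite Ez; apply functional_extensionality; intros; unfold seq_scal, zs; ring. }
    rewrite Z. rewrite <- Ex, Ht by auto. rewrite l2norm_scal, Rabs_R0. lra.
  - pose proof (l2norm_nonneg x).
    assert (P : 0 < l2norm x) by lra.
    specialize (Hb (seq_scal (/ l2norm x) x) (Hs _ _ Hx)).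
    rewrite Ht, !l2norm_scal in Hb by auto.
    rewrite Rabs_pos_eq in Hb by (left; apply Rinv_0_lt_compat; auto).
    rewrite Rinv_l in Hb by lra.
    specialize (Hb (Rle_refl 1)).
    apply Rmult_le_compat_l with (r := l2norm x) in Hb; [|lra].
    rewrite <- Rmult_assoc, Rinv_r, Rmult_1_l in Hb by lra. lra.
Qed.

Lemma proj_at B x k : proj B x k = if B k then x k else 0.
Proof. reflexivity. Qed.

Lemma Mop_at {H : CompleteNormedModule R_AbsRing} (K : seqR -> H) Kadj B x k :
  Mop K Kadj B x k = if B k then Kadj (K x) k else 0.
Proof. reflexivity. Qed.

Theorem proposition3p11
  (H : CompleteNormedModule R_AbsRing) (ip : H -> H -> R)
  (K : seqR -> H) (Kadj : H -> seqR) (f : H) (w : seqR) (w0 gamma : R)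
  (u : seqR) :
  is_inner_product H ip ->
  (* K linear on ell^2 *)
  (forall x y, l2 x -> l2 y -> K (seq_add x y) = plus (K x) (K y)) ->
  (forall (a : R) x, l2 x -> K (seq_scal a x) = scal a (K x)) ->
  (* K bounded *)
  (exists C, forall x, l2 x -> norm (K x) <= C * l2norm x) ->
  (* K injective on ell^2 *)
  (forall x y, l2 x -> l2 y -> K x = K y -> x = y) ->
  (* Kadj is the Hilbert space adjoint of K *)
  (forall y, l2 (Kadj y)) ->
  (forall x y, l2 x -> ip (K x) y = l2inner x (Kadj y)) ->
  0 < w0 -> (forall k, w0 <= w k) -> 0 < gamma ->
  l2 u ->
  let A := active_set K Kadj f w gamma u in
  let I := fun k => negb (A k) in
  (* M_AA is invertible on sequences supported on A (presupposed) *)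
  (exists MinvAA : seqR -> seqR,
     forall x, supported_on A x ->
       supported_on A (MinvAA x) /\ Mop K Kadj A (MinvAA x) = x /\
       MinvAA (Mop K Kadj A x) = x) /\
  (* G(u) is boundedly invertible on ell^2 with the norm estimate *)
  (exists Ginv : seqR -> seqR,
     (forall v, l2 v ->
        l2 (Ginv v) /\ Gop K Kadj A gamma (Ginv v) = v /\
        Ginv (Gop K Kadj A gamma v) = v) /\
     (exists C, forall v, l2 v -> l2norm (Ginv v) <= C * l2norm v) /\
     forall MinvAA : seqR -> seqR,
       (forall x, supported_on A x ->
          supported_on A (MinvAA x) /\ Mop K Kadj A (MinvAA x) = x /\
          MinvAA (Mop K Kadj A x) = x) ->
       Rbar_le (opnorm l2 Ginv)
         (Rbar_plus
            (Rbar_mult (opnorm (supported_on A) MinvAA)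
               (Rbar_plus (Finite (/ gamma))
                  (opnorm (supported_on I) (Mop K Kadj A))))
            (Finite 1))).
Proof.
  intros Hi HKadd HKscal [CK HCK] HKinj HKl2 Hadj Hw0 Hw Hg Hu A I.
  pose proof Hi as [Hs [Hp [Hsc Hn]]].
  assert (HK0 : K zs = zero).
  { replace zs with (seq_scal 0 zs) by (apply functional_extensionality; intros; unfold seq_scal, zs; ring).
    rewrite HKscal by apply l2_zs. exact (scal_zero_l (K zs)). }
  assert (HKc : forall y k, Kadj y k = ip (K (ev k)) y).
  { intros y k. rewrite Hadj by apply l2_ev. symmetry; apply l2inner_ev. }
  assert (HKadd' : forall y z, Kadj (plus y z) = seq_add (Kadj y) (Kadj z)).
  { intros y z; apply functional_extensionality; intros k. unfold seq_add. rewrite !HKc.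
    rewrite Hs, Hp, (Hs y), (Hs z). reflexivity. }
  assert (HKsc' : forall (a:R) y, Kadj (scal a y) = seq_scal a (Kadj y)).
  { intros a y; apply functional_extensionality; intros k. unfold seq_scal. rewrite !HKc.
    rewrite Hs, Hsc, (Hs y). reflexivity. }
  set (G := fun x => Kadj (K x)).
  assert (HGadd : forall x y, l2 x -> l2 y -> G (seq_add x y) = seq_add (G x) (G y)).
  { intros; unfold G; rewrite HKadd by auto; apply HKadd'. }
  assert (HGsc : forall a x, l2 x -> G (seq_scal a x) = seq_scal a (G x)).
  { intros; unfold G; rewrite HKscal by auto; apply HKsc'. }
  assert (HGip : forall x, l2 x -> ip (K x) (K x) = l2inner x (G x)) by (intros; apply Hadj; auto).
  assert (HKb : forall y, l2norm (Kadj y) <= Rabs CK * norm y).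
  { intros y. set (z := Kadj y). assert (Hz : l2 z) by apply HKl2.
    assert (E : l2norm z ^ 2 = ip (K z) y).
    { rewrite Hadj by auto. rewrite l2norm_eq, pow2_sqrt by (apply l2inner_pos; auto). reflexivity. }
    pose proof (ip_CS H ip Hi (K z) y).
    pose proof (HCK z Hz). assert (CK <= Rabs CK) by apply Rle_abs.
    pose proof (l2norm_nonneg z). pose proof (norm_ge_0 y). pose proof (norm_ge_0 (K z)).
    pose proof (Rabs_pos CK).
    destruct (Req_dec (l2norm z) 0) as [Z|Z]. rewrite Z. nra.
    assert (l2norm z ^2 <= Rabs CK * l2norm z * norm y).
    { rewrite E. apply Rle_trans with (norm (K z) * norm y); auto.
      apply Rmult_le_compat_r; auto. apply Rle_trans with (CK * l2norm z); auto. nra. }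
    apply (Rmult_le_reg_l (l2norm z)); [lra|]. nra. }
  assert (HMb0 : forall x, l2 x -> l2norm (Mop K Kadj A x) <= Rabs CK * Rabs CK * l2norm x).
  { intros x Hx. unfold Mop. eapply Rle_trans. apply l2norm_proj_le, HKl2.
    eapply Rle_trans. apply HKb. rewrite Rmult_assoc. apply Rmult_le_compat_l. apply Rabs_pos.
    eapply Rle_trans. apply HCK; auto. apply Rmult_le_compat_r. apply l2norm_nonneg. apply Rle_abs. }
  assert (Hfin : exists N, forall k, (N <= k)%nat -> A k = false).
  { set (s := seq_add u (seq_scal (-gamma) (Kadj (minus (K u) f)))).
    assert (Hs2 : l2 s) by (apply l2_add; auto; apply l2_scal; auto).
    pose proof (ex_series_lim_0 _ Hs2) as L.
    apply is_lim_seq_spec in L.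
    assert (Heps: 0 < (gamma*w0)^2) by (apply pow_lt; nra).
    destruct (L (mkposreal _ Heps)) as [N HN]. exists N. intros k Hk. specialize (HN k Hk). cbn [pos] in HN.
    unfold A, active_set. destruct (Rlt_dec _ _) as [R|R]; auto. exfalso.
    assert (E : s k = u k - gamma * Kadj (minus (K u) f) k) by (unfold s, seq_add, seq_scal; ring).
    rewrite <- E in R. rewrite Rminus_0_r in HN. rewrite Rabs_pos_eq in HN by apply pow2_ge_0.
    pose proof (Hw k).
    assert (gamma*w0 <= gamma*w k) by nra.
    rewrite <- pow2_abs in HN.
    assert (gamma * w0 < Rabs (s k)) by lra.
    assert (0 < gamma * w0) by nra. nra. }
  destruct Hfin as [N HN].
  set (S := filter A (seq 0 N)).
  assert (HS : forall k, In k S <-> A k = true).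
  { intros k; unfold S; rewrite filter_In, in_seq. split; [tauto|]. intros Hk; split; auto.
    destruct (Nat.lt_ge_cases k N); [lia|]. rewrite HN in Hk by lia. discriminate. }
  assert (Hex : forall (L : list nat) b, exists x, l2 x /\ (forall k, ~ In k L -> x k = 0) /\
             (forall k, In k L -> G x k = b k)).
  { induction L as [|s L IH]; intros b.
    - exists zs. split; [apply l2_zs|]. split; [intros; reflexivity|]. intros k [].
    - destruct (in_dec Nat.eq_dec s L) as [Hin|Hin].
      + destruct (IH b) as [x [Hx [Hx1 Hx2]]]. exists x. split; auto. split.
        * intros k Hk. apply Hx1. intros Hk'. apply Hk; right; auto.
        * intros k [Hk|Hk]; [subst; auto | auto].
      + destruct (IH (G (ev s))) as [z [Hz [Hz1 Hz2]]].
        destruct (IH b) as [y [Hy [Hy1 Hy2]]].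
        set (q := seq_add (ev s) (seq_scal (-1) z)).
        assert (Hq : l2 q) by (apply l2_add; [apply l2_ev | apply l2_scal; auto]).
        assert (Hqs : q s = 1).
        { unfold q, seq_add, seq_scal, ev, bump. rewrite (Hz1 s Hin).
          destruct (Nat.eq_dec s s); [ring|congruence]. }
        assert (HGq : forall k, In k L -> G q k = 0).
        { intros k Hk. unfold q. rewrite HGadd by (auto using l2_ev, l2_scal). rewrite HGsc by auto.
          unfold seq_add, seq_scal. rewrite Hz2 by auto. ring. }
        assert (Hq0 : forall k, ~ In k (s::L) -> q k = 0).
        { intros k Hk. unfold q, seq_add, seq_scal, ev, bump.
          rewrite Hz1 by (intro; apply Hk; right; auto).
          destruct (Nat.eq_dec k s); [subst; exfalso; apply Hk; left; auto | ring]. }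
        assert (Hd : ip (K q) (K q) = G q s).
        { rewrite HGip by auto. unfold l2inner. rewrite <- (Series_bump s (G q s)). apply Series_ext.
          intros k. unfold bump. destruct (Nat.eq_dec k s) as [->|ne]. rewrite Hqs; ring.
          destruct (in_dec Nat.eq_dec k L) as [kin|kin]. rewrite HGq by auto; ring.
          rewrite Hq0. ring. intros [E|E]; [congruence|auto]. }
        assert (Hdpos : 0 < G q s).
        { rewrite <- Hd. apply (ip_pos_strict H ip Hi). intros E. rewrite <- HK0 in E.
          apply HKinj in E; [|auto|apply l2_zs]. rewrite E in Hqs. unfold zs in Hqs. lra. }
        exists (seq_add y (seq_scal ((b s - G y s) / G q s) q)).
        split; [apply l2_add; auto; apply l2_scal; auto|]. split.
        * intros k Hk. unfold seq_add, seq_scal. rewrite Hq0 by auto.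
          rewrite Hy1 by (intro; apply Hk; right; auto). ring.
        * intros k Hk. rewrite HGadd by (auto; apply l2_scal; auto). rewrite HGsc by auto.
          unfold seq_add, seq_scal.
          destruct (Nat.eq_dec k s) as [->|ne].
          -- field. lra.
          -- destruct Hk as [Hk|Hk]; [congruence|]. rewrite (HGq k Hk), (Hy2 k Hk). ring. }
  assert (Huniq : forall x1 x2, supported_on A x1 -> supported_on A x2 ->
            Mop K Kadj A x1 = Mop K Kadj A x2 -> x1 = x2).
  { intros x1 x2 [H1 H1'] [H2 H2'] E.
    set (q := seq_add x1 (seq_scal (-1) x2)).
    assert (Hq : l2 q) by (apply l2_add; auto; apply l2_scal; auto).
    assert (HGq : forall k, A k = true -> G q k = 0).
    { intros k Hk. apply (f_equal (fun s => s k)) in E. unfold Mop, proj in E. rewrite Hk in E.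
      unfold q. rewrite HGadd, HGsc by (auto using l2_scal). unfold seq_add, seq_scal.
      unfold G; rewrite E; ring. }
    assert (Hq0 : forall k, A k = false -> q k = 0).
    { intros; unfold q, seq_add, seq_scal; rewrite H1', H2' by auto; ring. }
    assert (Hip : ip (K q) (K q) = 0).
    { rewrite HGip by auto. unfold l2inner. rewrite <- Series_zero. apply Series_ext. intros k. unfold zs.
      destruct (A k) eqn:Ak. rewrite HGq by auto; ring. rewrite Hq0 by auto; ring. }
    assert (Kq : K q = zero).
    { destruct (classic (K q = zero)) as [|Hne]; auto. apply (ip_pos_strict H ip Hi) in Hne. lra. }
    rewrite <- HK0 in Kq. apply HKinj in Kq; auto using l2_zs.
    apply functional_extensionality; intros k. apply (f_equal (fun s => s k)) in Kq.
    unfold q, seq_add, seq_scal, zs in Kq. lra. }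
  set (Minv := fun b => epsilon (inhabits zs) (fun x => supported_on A x /\ Mop K Kadj A x = b)).
  assert (HMinv : forall b, supported_on A b -> supported_on A (Minv b) /\ Mop K Kadj A (Minv b) = b).
  { intros b [Hb Hb']. unfold Minv. apply epsilon_spec.
    destruct (Hex S b) as [x [Hx [Hx1 Hx2]]]. exists x. split; [split; auto|].
    - intros k Hk. apply Hx1. rewrite HS. congruence.
    - apply functional_extensionality; intros k. unfold Mop, proj. destruct (A k) eqn:Ak.
      + apply Hx2. apply HS; auto.
      + symmetry; auto. }
  assert (HMsupp : forall x, supported_on A (Mop K Kadj A x)).
  { intros x; split. apply l2_proj, HKl2. intros k Hk; unfold Mop, proj; rewrite Hk; reflexivity. }
  assert (HMinvM : forall x, supported_on A x -> Minv (Mop K Kadj A x) = x).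
  { intros x Hx. apply Huniq; auto. apply HMinv, HMsupp. apply HMinv, HMsupp. }
  assert (HMadd : forall x y, l2 x -> l2 y ->
            Mop K Kadj A (seq_add x y) = seq_add (Mop K Kadj A x) (Mop K Kadj A y)).
  { intros x y Hx Hy. unfold Mop. change (Kadj (K (seq_add x y))) with (G (seq_add x y)).
    rewrite HGadd by auto. apply functional_extensionality; intros k. unfold proj, seq_add.
    destruct (A k); unfold G; ring. }
  assert (HMsc : forall a x, l2 x -> Mop K Kadj A (seq_scal a x) = seq_scal a (Mop K Kadj A x)).
  { intros a x Hx. unfold Mop. change (Kadj (K (seq_scal a x))) with (G (seq_scal a x)).
    rewrite HGsc by auto. apply functional_extensionality; intros k. unfold proj, seq_scal.
    destruct (A k); unfold G; ring. }
  assert (HMinvadd : forall b1 b2, supported_on A b1 -> supported_on A b2 ->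
            Minv (seq_add b1 b2) = seq_add (Minv b1) (Minv b2)).
  { intros b1 b2 Hb1 Hb2. pose proof (HMinv _ Hb1) as [S1 M1]. pose proof (HMinv _ Hb2) as [S2 M2].
    apply Huniq. apply HMinv, supp_add; auto. apply supp_add; auto.
    rewrite HMadd by (apply S1 || apply S2). rewrite M1, M2. apply HMinv, supp_add; auto. }
  assert (HMinvsc : forall a b, supported_on A b -> Minv (seq_scal a b) = seq_scal a (Minv b)).
  { intros a b Hb. pose proof (HMinv _ Hb) as [S1 M1].
    apply Huniq. apply HMinv, supp_scal; auto. apply supp_scal; auto.
    rewrite HMsc by apply S1. rewrite M1. apply HMinv, supp_scal; auto. }
  assert (HMb : forall L, (forall k, In k L -> A k = true) -> exists C, 0 <= C /\
     forall b, supported_on A b -> (forall k, ~ In k L -> b k = 0) -> l2norm (Minv b) <= C * l2norm b).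
  { induction L as [|s L IH]; intros HL.
    - exists 0. split; [lra|]. intros b Hb Hb0.
      assert (Ez : b = zs) by (apply functional_extensionality; intros k; apply Hb0; auto).
      assert (E0 : seq_scal 0 zs = zs) by (apply functional_extensionality; intros; unfold seq_scal, zs; ring).
      assert (Hz : supported_on A zs) by (split; [apply l2_zs|reflexivity]).
      rewrite Ez, <- E0, HMinvsc by auto. rewrite l2norm_scal, Rabs_R0. lra.
    - destruct IH as [C [HC HCb]]. intros k Hk; apply HL; right; auto.
      assert (As : A s = true) by (apply HL; left; auto).
      exists (C + l2norm (Minv (ev s))). split. pose proof (l2norm_nonneg (Minv (ev s))); lra.
      intros b [Hb Hb'] Hb0.
      set (b' := proj (fun k => negb (Nat.eqb k s)) b).
      assert (Hb'supp : supported_on A b').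
      { split; [apply l2_proj; auto|]. intros k Hk; unfold b', proj; rewrite Hb' by auto.
        destruct (negb _); reflexivity. }
      assert (Hevs : supported_on A (ev s)).
      { split; [apply l2_ev|]. intros k Hk; unfold ev, bump.
        destruct (Nat.eq_dec k s); [subst; congruence|reflexivity]. }
      assert (Eb : b = seq_add b' (seq_scal (b s) (ev s))).
      { apply functional_extensionality; intros k. unfold b', proj, seq_add, seq_scal, ev, bump.
        destruct (Nat.eq_dec k s) as [->|ne]. rewrite Nat.eqb_refl; simpl; ring.
        apply Nat.eqb_neq in ne; rewrite ne; simpl; ring. }
      assert (B' : l2norm (Minv b') <= C * l2norm b').
      { apply HCb; auto. intros k Hk. unfold b', proj. destruct (Nat.eq_dec k s) as [->|ne].
        rewrite Nat.eqb_refl; reflexivity.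
        pose proof ne as ne2. apply Nat.eqb_neq in ne2. rewrite ne2; simpl. apply Hb0. intros [E|E]; [congruence | auto]. }
      pose proof (l2norm_proj_le (fun k => negb (k =? s)) b Hb) as P1. fold b' in P1.
      pose proof (term_le b s Hb) as P2.
      rewrite Eb at 1. rewrite HMinvadd by (auto using supp_scal). rewrite HMinvsc by auto.
      eapply Rle_trans. apply l2_Mink. apply HMinv; auto. apply l2_scal, HMinv; auto.
      rewrite l2norm_scal.
      pose proof (l2norm_nonneg (Minv (ev s))). pose proof (l2norm_nonneg b').
      assert (C * l2norm b' <= C * l2norm b) by (apply Rmult_le_compat_l; auto).
      assert (Rabs (b s) * l2norm (Minv (ev s)) <= l2norm b * l2norm (Minv (ev s)))
        by (apply Rmult_le_compat_r; auto).
      lra. }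
  destruct (HMb S (fun k Hk => proj1 (HS k) Hk)) as [CM [HCM HCMb]].
  assert (HMinvb : forall b, supported_on A b -> l2norm (Minv b) <= CM * l2norm b).
  { intros b Hb. apply HCMb; auto. intros k Hk. apply (proj2 Hb).
    destruct (A k) eqn:Ak; auto. exfalso; apply Hk, HS; auto. }
  set (Ginv := fun v => seq_add (Minv (seq_add (seq_scal (/gamma) (proj A v))
                  (seq_scal (-1) (Mop K Kadj A (proj I v))))) (proj I v)).
  assert (HyS : forall v, l2 v -> supported_on A (seq_add (seq_scal (/gamma) (proj A v))
                  (seq_scal (-1) (Mop K Kadj A (proj I v))))).
  { intros v Hv. apply supp_add; apply supp_scal. apply supp_proj; auto. apply HMsupp. }
  assert (HIsupp : forall v, l2 v -> supported_on I (proj I v)) by (intros; apply supp_proj; auto).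
  assert (Hgl2 : forall v, l2 v -> l2 (Ginv v)).
  { intros v Hv. unfold Ginv. apply l2_add. apply HMinv, HyS; auto. apply l2_proj; auto. }
  assert (Hchain : forall r1 r2, 0 <= r1 -> 0 <= r2 ->
     (forall x, supported_on A x -> l2norm (Minv x) <= r1 * l2norm x) ->
     (forall x, supported_on I x -> l2norm (Mop K Kadj A x) <= r2 * l2norm x) ->
     forall v, l2 v -> l2norm (Ginv v) <= (r1 * (/gamma + r2) + 1) * l2norm v).
  { intros r1 r2 Hr1 Hr2 B1 B2 v Hv. pose proof (HyS v Hv) as Hy. unfold Ginv.
    eapply Rle_trans. apply l2_Mink. apply (HMinv _ Hy). apply l2_proj; auto.
    pose proof (B1 _ Hy) as Q1.
    pose proof (l2_Mink (seq_scal (/gamma) (proj A v)) (seq_scal (-1) (Mop K Kadj A (proj I v)))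
       (l2_scal _ _ (l2_proj _ _ Hv)) (l2_scal _ _ (proj1 (HMsupp _)))) as Q2.
    rewrite !l2norm_scal in Q2. rewrite Rabs_pos_eq in Q2 by (left; apply Rinv_0_lt_compat; auto).
    replace (Rabs (-1)) with 1 in Q2 by (rewrite Rabs_left; lra).
    pose proof (B2 _ (HIsupp v Hv)) as Q3.
    pose proof (l2norm_proj_le A v Hv) as Q4. pose proof (l2norm_proj_le I v Hv) as Q5.
    assert (/gamma * l2norm (proj A v) <= /gamma * l2norm v)
      by (apply Rmult_le_compat_l; auto; left; apply Rinv_0_lt_compat; auto).
    assert (r2 * l2norm (proj I v) <= r2 * l2norm v) by (apply Rmult_le_compat_l; auto).
    assert (Ey : l2norm (seq_add (seq_scal (/ gamma) (proj A v)) (seq_scal (-1) (Mop K Kadj A (proj I v))))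
                 <= (/gamma + r2) * l2norm v) by lra.
    apply Rmult_le_compat_l with (r := r1) in Ey; auto. lra. }
  assert (HGinv1 : forall v, l2 v -> Gop K Kadj A gamma (Ginv v) = v).
  { intros v Hv. pose proof (HMinv _ (HyS v Hv)) as [[Sl Sz] SM].
    apply functional_extensionality; intros k. unfold Gop.
    destruct (A k) eqn:Ak.
    - change (Kadj (K (Ginv v)) k) with (G (Ginv v) k). unfold Ginv.
      rewrite HGadd by (auto using l2_proj). unfold G.
      apply (f_equal (fun s => s k)) in SM. rewrite Mop_at, Ak in SM.
      unfold seq_add at 1. rewrite SM. unfold seq_add, seq_scal. unfold Mop. rewrite !proj_at, Ak.
      field. lra.
    - unfold Ginv, seq_add. rewrite Sz by auto. rewrite proj_at. unfold I. rewrite Ak. simpl. ring. }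
  assert (HGinv2 : forall v, l2 v -> Ginv (Gop K Kadj A gamma v) = v).
  { intros v Hv.
    assert (E1 : proj I (Gop K Kadj A gamma v) = proj I v).
    { apply functional_extensionality; intros k; unfold proj, I, Gop. destruct (A k); reflexivity. }
    assert (Ev : v = seq_add (proj A v) (proj I v)).
    { apply functional_extensionality; intros k; unfold seq_add, proj, I; destruct (A k); simpl; ring. }
    assert (HGv : G v = seq_add (G (proj A v)) (G (proj I v))).
    { rewrite Ev at 1. apply HGadd; apply l2_proj; auto. }
    assert (E2 : seq_add (seq_scal (/gamma) (proj A (Gop K Kadj A gamma v)))
                  (seq_scal (-1) (Mop K Kadj A (proj I v))) = Mop K Kadj A (proj A v)).
    { apply functional_extensionality; intros k.
      pose proof (f_equal (fun s => s k) HGv) as Hk. unfold seq_add, G in Hk.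
      unfold seq_add, seq_scal, Mop. rewrite !proj_at. unfold Gop.
      destruct (A k) eqn:Ak.
      - rewrite Hk. field. lra.
      - ring. }
    unfold Ginv. cbv beta. rewrite E1, E2. rewrite HMinvM by (apply supp_proj; auto).
    symmetry; exact Ev. }
  split.
  { exists Minv. intros x Hx. split; [apply HMinv; auto|]. split; [apply HMinv; auto|]. apply HMinvM; auto. }
  exists Ginv. split.
  { intros v Hv. split; [auto|]. split; auto. }
  split.
  { exists (CM * (/gamma + Rabs CK * Rabs CK) + 1). apply Hchain; auto.
    apply Rmult_le_pos; apply Rabs_pos.
    intros x Hx. apply HMb0. apply Hx. }
  intros MinvAA' HM'.
  assert (Eq : forall x, supported_on A x -> MinvAA' x = Minv x).
  { intros x Hx. destruct (HMinv x Hx) as [Sx Mx].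
    rewrite <- Mx at 1. apply (HM' (Minv x) Sx). }
  assert (HzA : supported_on A zs) by (split; [apply l2_zs|reflexivity]).
  assert (HzI : supported_on I zs) by (split; [apply l2_zs|reflexivity]).
  destruct (opnorm_fin (supported_on A) MinvAA' CM HzA) as [r1 [E1 [Hr1 B1]]].
  { intros x Hx Hx1. rewrite Eq by auto. eapply Rle_trans. apply HMinvb; auto.
    apply Rmult_le_compat_l with (r := CM) in Hx1; auto. lra. }
  destruct (opnorm_fin (supported_on I) (Mop K Kadj A) (Rabs CK * Rabs CK) HzI) as [r2 [E2 [Hr2 B2]]].
  { intros x Hx Hx1. eapply Rle_trans. apply HMb0. apply Hx.
    apply Rmult_le_compat_l with (r := Rabs CK * Rabs CK) in Hx1; [lra|].
    apply Rmult_le_pos; apply Rabs_pos. }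
  pose proof (scale_bound (supported_on A) MinvAA' r1 (fun x Hx => proj1 Hx)
    (fun a x Hx => supp_scal A a x Hx)
    (fun a x Hx => eq_trans (Eq _ (supp_scal A a x Hx)) (eq_trans (HMinvsc a x Hx) (f_equal (seq_scal a) (eq_sym (Eq x Hx))))) B1) as B1'.
  pose proof (scale_bound (supported_on I) (Mop K Kadj A) r2 (fun x Hx => proj1 Hx)
    (fun a x Hx => supp_scal I a x Hx) (fun a x Hx => HMsc a x (proj1 Hx)) B2) as B2'.
  rewrite E1, E2.
  change (Rbar_plus (Rbar_mult (Finite r1) (Rbar_plus (Finite (/ gamma)) (Finite r2))) (Finite 1))
    with (Finite (r1 * (/gamma + r2) + 1)).
  unfold opnorm. apply (proj2 (Lub_Rbar_correct _)). intros r [v [Hv [Hv1 ->]]]. simpl.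
  eapply Rle_trans. apply (Hchain r1 r2); auto.
  intros x Hx. rewrite <- Eq by auto. apply B1'; auto.
  assert (0 <= r1 * (/gamma + r2) + 1).
  { assert (0 < /gamma) by (apply Rinv_0_lt_compat; auto). nra. }
  apply Rmult_le_compat_l with (r := r1 * (/gamma + r2) + 1) in Hv1; auto. lra.
Qed.
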